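(* Let $1\le k\le d$ and $\mu\ge1$ be integers, and let $t_0,\dots,t_\mu$ be defined by $t_\mu=1$ and $t_m=\sum_{j=m+1}^{\mu}t_j\,(j-m-1)\binom{d-k+1}{j-m}$ for $0\le m<\mu$. Then $$\sum_{m=0}^{\mu}t_m\binom{d}{m}=\sum_{m=0}^{\mu}(d-k)^{\mu-m}\binom{k}{m},\qquad \sum_{m=0}^{\mu}t_m\binom{d-1}{m-1}=\sum_{m=0}^{\mu}(d-k)^{\mu-m}\binom{k-1}{m-1},$$ $$\sum_{m=0}^{\mu}t_m\, m\left[\binom{d+1}{m+1}-\binom{d-k+1}{m+1}\right]=\sum_{m=0}^{\mu}k(d-k)^{\mu-m}\binom{k}{m}-\binom{k}{\mu+1}.$$
   Context: Conventions: $0^0=1$; $\binom{\ell}{m}=0$ if $m<0$ or $m>\ell$ (for $\ell\ge0$). *)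

(* Defs.v *)
From HB Require Import structures.
From mathcomp Require Import all_boot all_order all_algebra.
Set Implicit Arguments. Unset Strict Implicit. Unset Printing Implicit Defensive.
Import Order.TTheory GRing.Theory Num.Theory.
Local Open Scope ring_scope.

Definition binz (l : nat) (m : int) : int :=
  match m with
  | Posz m' => ('C(l, m'))%:Z
  | Negz _ => 0
  end.

(* Main.v *)
Require Import Defs.
From HB Require Import structures.
From mathcomp Require Import all_boot all_order all_algebra.
From mathcomp Require Import zify ring lra.
Import Order.TTheory GRing.Theory Num.Theory.
Local Open Scope ring_scope.


Lemma coefX1n (N i : nat) : (('X + 1 : {poly int})^+N)`_i = ('C(N,i))%:Z.
Proof.
elim: N i => [|N IH] i.
  by rewrite expr0 coef1; case: i.
rewrite exprS mulrDl mul1r coefD coefXM IH; case: i => [|i] /=.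
  by rewrite IH add0r !bin0.
by rewrite IH binS PoszD addrC.
Qed.

Lemma coefbinz (N m : nat) : ('X * ('X + 1 : {poly int})^+N)`_m = binz N (m%:Z - 1).
Proof.
rewrite coefXM; case: m => [|m] //=.
by rewrite coefX1n subn1.
Qed.

Definition Rp (N : nat) : {poly int} := \poly_(i < N) ('C(N, i.+1))%:Z.

Lemma coefR N m : (Rp N)`_m = ('C(N, m.+1))%:Z.
Proof.
rewrite coef_poly; case: ltnP => // h.
by rewrite bin_small //; lia.
Qed.

Lemma XR N : 'X * Rp N = ('X + 1)^+N - 1.
Proof.
apply/polyP => i; rewrite coefXM coefB coefX1n coef1.
case: i => [|i] /=; first by rewrite bin0 subrr.
by rewrite coefR subr0.
Qed.

Definition Qp (n : nat) : {poly int} := ('X + 1)^+n * (1 - (n%:Z)%:P * 'X).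

Lemma coefQ0 n : (Qp n)`_0 = 1.
Proof. by rewrite /Qp mulrBr mulr1 coefB coefX1n bin0 mulrA coefMX subr0. Qed.

Lemma coefQS n i : (Qp n)`_i.+1 = - ((i%:Z) * ('C(n.+1, i.+1))%:Z).
Proof.
rewrite /Qp mulrBr mulr1 coefB coefX1n mulrA coefMX /= mulrC coefCM coefX1n.
have h1 := mul_bin_diag n.+1 i. have h2 := binS n i.
rewrite /= in h1.
move: h1 h2. set a := 'C(n, i). set b := 'C(n.+1, i.+1). set c := 'C(n, i.+1).
move=> h1 h2.
have h1' : (n%:Z + 1) * a%:Z = (i%:Z + 1) * b%:Z.
  by nia.
have h2' : b%:Z = c%:Z + a%:Z by rewrite h2 PoszD.
rewrite h2' in h1'.
have : c%:Z - n%:Z * a%:Z = - (i%:Z * (c%:Z + a%:Z)).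
  by nia.
by rewrite h2'.
Qed.

Lemma keyX (n mu : nat) (t : nat -> int) (ht_top : t mu = 1)
  (ht_rec : forall m : nat, (m < mu)%N ->
     t m = \sum_(m.+1 <= j < mu.+1)
             t j * ((j - m - 1)%N)%:Z * ('C(n.+1, j - m))%:Z) (l : nat) :
  \sum_(0 <= m < mu.+1) t m * (Qp n * 'X^l)`_m = (l == mu)%:R.
Proof.
case: (ltngtP l mu) => hl.
- rewrite (big_cat_nat (n:=l)) //=; last by lia.
  rewrite big1_seq /= ?add0r; last first.
    by move=> i; rewrite mem_index_iota => /andP[_ hi]; rewrite coefMXn hi mulr0.
  rewrite big_ltn; last by lia.
  rewrite coefMXn ltnn subnn coefQ0 mulr1 (ht_rec l hl).
  rewrite -big_split big1_seq //= => j; rewrite mem_index_iota => /andP[h1 h2].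
  rewrite coefMXn ifF; last by lia.
  have -> : (j - l)%N = (j - l - 1).+1 by lia.
  rewrite coefQS.
  have -> : (j - l - 1).+1 = (j - l)%N by lia.
  by rewrite mulrN mulrA subrr.
- rewrite big1_seq //= => i; rewrite mem_index_iota => /andP[_ hi].
  by rewrite coefMXn (_ : (i < l)%N) ?mulr0 //; lia.
- subst l; rewrite big_nat_recr //= big1_seq ?add0r; last first.
    by move=> i; rewrite mem_index_iota => hi; rewrite coefMXn ifT ?mulr0 //; lia.
  by rewrite coefMXn ltnn subnn coefQ0 ht_top mulr1.
Qed.

Lemma keyQ (n mu : nat) (t : nat -> int) (ht_top : t mu = 1)
  (ht_rec : forall m : nat, (m < mu)%N ->
     t m = \sum_(m.+1 <= j < mu.+1)
             t j * ((j - m - 1)%N)%:Z * ('C(n.+1, j - m))%:Z) (G : {poly int}) :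
  \sum_(0 <= m < mu.+1) t m * (Qp n * G)`_m = G`_mu.
Proof.
have eG : G = \sum_(i < (size G + mu).+1) G`_i *: 'X^i.
  rewrite -poly_def; apply/polyP=> j; rewrite coef_poly; case: ltnP => // h.
  by rewrite nth_default //; apply: leq_trans (leq_addr mu _) (ltnW h).
rewrite {1}eG.
under eq_bigr => m _ do rewrite mulr_sumr coef_sum mulr_sumr.
rewrite exchange_big /=.
under eq_bigr => i _ do (under eq_bigr => m _ do rewrite -scalerAr coefZ mulrCA; rewrite -mulr_sumr (keyX n mu t ht_top ht_rec)).
have hmu : (mu < (size G + mu).+1)%N by lia.
rewrite (bigD1 (Ordinal hmu)) //= eqxx mulr1 big1 ?addr0 // => i hi.
rewrite (_ : (nat_of_ord i == mu) = false) ?mulr0 //.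
apply/negbTE; apply: contra hi => /eqP h; apply/eqP/val_inj => /=; exact h.
Qed.

Definition Hp (c : int) (mu : nat) : {poly int} := \poly_(i < mu.+1) c ^+ i.

Lemma HpE (c : int) mu : (1 - c%:P * 'X) * Hp c mu = 1 - (c ^+ mu.+1)%:P * 'X^(mu.+1).
Proof.
rewrite /Hp poly_def.
have -> : \sum_(i < mu.+1) c ^+ i *: 'X^i = \sum_(i < mu.+1) (1 ^+ (mu.+1.-1 - i) * (c%:P * 'X) ^+ i).
  by apply: eq_bigr => i _; rewrite expr1n mul1r exprMn -mul_polyC rmorphXn.
by rewrite -subrXX expr1n exprMn rmorphXn.
Qed.

Lemma K3 (n mu : nat) (t : nat -> int) (ht_top : t mu = 1)
  (ht_rec : forall m : nat, (m < mu)%N ->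
     t m = \sum_(m.+1 <= j < mu.+1)
             t j * ((j - m - 1)%N)%:Z * ('C(n.+1, j - m))%:Z) (A : {poly int}) :
  \sum_(0 <= m < mu.+1) t m * (A * ('X + 1)^+n)`_m
   = \sum_(j < mu.+1) A`_j * (n%:Z) ^+ (mu - j).
Proof.
set c := n%:Z.
have e : A * ('X + 1)^+n = Qp n * (A * Hp c mu)
     + 'X^(mu.+1) * ((c ^+ mu.+1)%:P * A * ('X + 1)^+n).
  have h := HpE c mu.
  rewrite /Qp.
  have -> : ('X + 1) ^+ n * (1 - (n%:Z)%:P * 'X) * (A * Hp c mu)
     = A * ('X + 1) ^+ n * ((1 - c%:P * 'X) * Hp c mu) by rewrite /c; ring.
  rewrite h; ring.
rewrite e.
under eq_bigr => m _ do rewrite coefD mulrDr.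
rewrite big_split /= (keyQ n mu t ht_top ht_rec) big1_seq ?addr0; last first.
  by move=> i; rewrite mem_index_iota => hi; rewrite coefXnM ifT ?mulr0 //; lia.
rewrite coefM; apply: eq_bigr => j _.
rewrite /Hp coef_poly ifT //; lia.
Qed.

Lemma coefP3 (d n m : nat) :
  (((d%:Z)%:P + 1) * ('X+1)^+d - ((n%:Z)%:P + 1) * ('X+1)^+n - Rp d.+1 + Rp n.+1)`_m
  = m%:Z * (('C(d.+1,m.+1))%:Z - ('C(n.+1,m.+1))%:Z).
Proof.
rewrite !coefD !coefN !mulrDl !coefD !coefCM !mul1r !coefX1n !coefR.
have h1 := mul_bin_diag d.+1 m. have h2 := mul_bin_diag n.+1 m.
rewrite /= in h1 h2.
nia.
Qed.

Lemma P3E (d k n : nat) (hd : d = (k + n)%N) :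
  ((d%:Z)%:P + 1) * ('X+1)^+d - ((n%:Z)%:P + 1) * ('X+1)^+n - Rp d.+1 + Rp n.+1
  = ((d%:Z)%:P * ('X+1)^+k - Rp k - (n%:Z)%:P) * ('X+1)^+n.
Proof.
have hX : ('X : {poly int}) != 0 by rewrite polyX_eq0.
apply: (mulfI hX).
have h1 := XR d.+1. have h2 := XR n.+1. have h3 := XR k.
set D := (d%:Z)%:P. set N := (n%:Z)%:P.
have -> : 'X * ((D + 1) * ('X + 1) ^+ d - (N + 1) * ('X + 1) ^+ n - Rp d.+1 + Rp n.+1)
  = 'X * ((D + 1) * ('X + 1) ^+ d) - 'X * ((N + 1) * ('X + 1) ^+ n) - 'X * Rp d.+1 + 'X * Rp n.+1 by ring.
have -> : 'X * ((D * ('X + 1) ^+ k - Rp k - N) * ('X + 1) ^+ n)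
  = (D * 'X * ('X + 1) ^+ k - 'X * Rp k - N * 'X) * ('X + 1) ^+ n by ring.
rewrite h1 h2 h3.
have ed : ('X + 1 : {poly int}) ^+ d = ('X+1)^+k * ('X+1)^+n by rewrite -exprD hd.
rewrite !exprS ed.
rewrite /N /D.
have -> : (d%:Z)%:P = (k%:Z)%:P + (n%:Z)%:P :> {poly int} by rewrite -rmorphD hd PoszD.
ring.
Qed.

Lemma finalsum (k mu : nat) (c : int) :
  \sum_(j < mu.+1) ('C(k, j.+1))%:Z * c ^+ (mu - j) + c ^+ mu.+1
  = c * \sum_(j < mu.+1) ('C(k, j))%:Z * c ^+ (mu - j) + ('C(k, mu.+1))%:Z.
Proof.
set T := \sum_(j < mu.+2) ('C(k, j))%:Z * c ^+ (mu.+1 - j).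
have e1 : T = c ^+ mu.+1 + \sum_(j < mu.+1) ('C(k, j.+1))%:Z * c ^+ (mu - j).
  by rewrite /T big_ord_recl /= bin0 mul1r subn0.
have e2 : T = c * \sum_(j < mu.+1) ('C(k, j))%:Z * c ^+ (mu - j) + ('C(k, mu.+1))%:Z.
  rewrite /T big_ord_recr /= subnn expr0 mulr1 mulr_sumr; congr (_ + _).
  apply: eq_bigr => j _; rewrite subSn ?exprS; last by rewrite -ltnS.
  by rewrite mulrCA.
by rewrite addrC -e1 e2.
Qed.

Theorem mainTheorem10 (k d mu : nat) (t : nat -> int)
  (hk1 : (1 <= k)%N) (hkd : (k <= d)%N) (hmu : (1 <= mu)%N)
  (ht_top : t mu = 1)
  (ht_rec : forall m : nat, (m < mu)%N ->
     t m = \sum_(m.+1 <= j < mu.+1)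
             t j * ((j - m - 1)%N)%:Z * ('C(d - k + 1, j - m))%:Z) :
  (\sum_(0 <= m < mu.+1) t m * ('C(d, m))%:Z
     = \sum_(0 <= m < mu.+1) ((d - k)%N)%:Z ^+ (mu - m) * ('C(k, m))%:Z)
  /\
  (\sum_(0 <= m < mu.+1) t m * binz (d - 1) (m%:Z - 1)
     = \sum_(0 <= m < mu.+1) ((d - k)%N)%:Z ^+ (mu - m) * binz (k - 1) (m%:Z - 1))
  /\
  (\sum_(0 <= m < mu.+1) t m * m%:Z
        * (('C(d.+1, m.+1))%:Z - ('C(d - k + 1, m.+1))%:Z)
     = \sum_(0 <= m < mu.+1) k%:Z * ((d - k)%N)%:Z ^+ (mu - m) * ('C(k, m))%:Z
       - ('C(k, mu.+1))%:Z).
Proof.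
set n := (d - k)%N.
have hrec : forall m : nat, (m < mu)%N ->
     t m = \sum_(m.+1 <= j < mu.+1)
             t j * ((j - m - 1)%N)%:Z * ('C(n.+1, j - m))%:Z.
  by move=> m hm; rewrite ht_rec // addn1.
have hd : d = (k + n)%N by rewrite /n; lia.
have K := K3 n mu t ht_top hrec.
split; [|split].
- under eq_bigr => m _ do rewrite -coefX1n.
  have -> : ('X + 1 : {poly int}) ^+ d = ('X+1)^+k * ('X+1)^+n by rewrite -exprD -hd.
  rewrite K big_mkord; apply: eq_bigr => j _; by rewrite coefX1n mulrC.
- under eq_bigr => m _ do rewrite -coefbinz.
  have -> : 'X * ('X + 1 : {poly int}) ^+ (d - 1) = ('X * ('X+1)^+(k - 1)) * ('X+1)^+n.
    by rewrite -mulrA -exprD; congr (_ * _ ^+ _); lia.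
  rewrite K big_mkord; apply: eq_bigr => j _; by rewrite coefbinz mulrC.
- rewrite addn1.
  under eq_bigr => m _ do rewrite -mulrA -coefP3.
  rewrite (P3E d k n hd) K.
  under eq_bigr => j _ do rewrite coefB coefB coefCM coefX1n coefR coefC !mulrBl.
  rewrite !sumrB.
  have e3 : \sum_(i<mu.+1) (if (i:nat) == 0%N then n%:Z else 0) * n%:Z^+(mu-i) = n%:Z ^+ mu.+1.
    rewrite big_ord_recl /= subn0 -exprS big1 ?addr0 // => i _.
    by rewrite mul0r.
  have e1 : \sum_(i<mu.+1) d%:Z * ('C(k,i))%:Z * n%:Z^+(mu-i)
        = d%:Z * \sum_(j < mu.+1) ('C(k, j))%:Z * n%:Z ^+ (mu - j).
    by rewrite mulr_sumr; apply: eq_bigr => i _; rewrite mulrA.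
  have e4 : \sum_(0 <= m < mu.+1) k%:Z * n%:Z ^+ (mu - m) * ('C(k, m))%:Z
        = k%:Z * \sum_(j < mu.+1) ('C(k, j))%:Z * n%:Z ^+ (mu - j).
    by rewrite big_mkord mulr_sumr; apply: eq_bigr => i _; rewrite -mulrA [_ ^+ _ * _]mulrC.
  rewrite e3 e1 e4.
  have hk : k%:Z = d%:Z - n%:Z by rewrite hd PoszD addrK.
  have hf := finalsum k mu (n%:Z).
  set S2 := \sum_(j < mu.+1) ('C(k, j.+1))%:Z * _ in hf *.
  set S1 := \sum_(j < mu.+1) _ in hf *.
  have -> : S2 = n%:Z * S1 + ('C(k, mu.+1))%:Z - n%:Z ^+ mu.+1 by rewrite -hf; ring.
  rewrite hk; ring.
Qed.
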